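(* Let $G$ be a $g$-barrelled convergence group and $L$ a Hausdorff locally quasi-convex topological group. Then every compact subset of $\Gamma_s(G,L)$ is equicontinuous.
   Context: All groups are abelian. A convergence structure on a set $X$ assigns to each $x$ a collection of filters converging to $x$. This assignment must satisfy three conditions: point ultrafilters converge to their point; finite intersections of filters converging to $x$ converge to $x$; and finer filters of convergent filters converge. Continuity means convergent filters go to convergent filters. A convergence group is an abelian group with a convergence structure such that $\mathcal F\to x$, $\mathcal G\to y$ imply $\mathcal F-\mathcal G\to x-y$. Every topological group is a convergence group, with convergent filters being those finer than the neighbourhood filter. $\mathbb T=\mathbb R/\mathbb Z$, $\mathbb T_+=\rho([-1/4,1/4])$ where $\rho:\mathbb R\to\mathbb T$ is the quotient map. For convergence groups $G,L$, $\Gamma(G,L)$ is the group of continuous homomorphisms, and $\Gamma_s(G,L)$ is $\Gamma(G,L)$ with the topology of pointwise convergence. $\Gamma_s G=\Gamma_s(G,\mathbb T)$. A set $M\subseteq\Gamma(G,L)$ is equicontinuous if for every filter $\mathcal F\to0$ in $G$, the filter generated by $\{\varphi(x):\varphi\in M,x\in F\}$, $F\in\mathcal F$, converges to $0$ in $L$. A convergence group $G$ is $g$-barrelled if every compact subset of $\Gamma_s G$ is equicontinuous. A subset $A$ of a topological group $L$ is quasi-convex if for every $x\notin A$ there is a continuous character $\varphi$ with $\varphi(A)\subseteq\mathbb T_+$ and $\varphi(x)\notin\mathbb T_+$. $L$ is locally quasi-convex if it has a zero neighbourhood base of quasi-convex sets. *)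

(* Defs.v *)
From Stdlib Require Import Reals ZArith.
Open Scope R_scope.

(** * Filters (not required to be proper; the improper filter converges everywhere) *)
Definition is_filter {X : Type} (F : (X -> Prop) -> Prop) : Prop :=
  F (fun _ => True) /\
  (forall A B : X -> Prop, F A -> (forall x, A x -> B x) -> F B) /\
  (forall A B : X -> Prop, F A -> F B -> F (fun x => A x /\ B x)).

Definition is_ultrafilter {X : Type} (F : (X -> Prop) -> Prop) : Prop :=
  is_filter F /\ ~ F (fun _ => False) /\
  (forall A : X -> Prop, F A \/ F (fun x => ~ A x)).

Definition point_filter {X : Type} (x : X) : (X -> Prop) -> Prop := fun A => A x.
Definition filter_inter {X : Type} (F H : (X -> Prop) -> Prop) : (X -> Prop) -> Prop :=
  fun A => F A /\ H A.
Definition filter_image {X Y : Type} (f : X -> Y) (F : (X -> Prop) -> Prop)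
  : (Y -> Prop) -> Prop := fun S => F (fun a => S (f a)).

Record GrpConv := {
  gc_car :> Type;
  gc_zero : gc_car;
  gc_add : gc_car -> gc_car -> gc_car;
  gc_opp : gc_car -> gc_car;
  gc_conv : ((gc_car -> Prop) -> Prop) -> gc_car -> Prop
}.

Definition gc_sub (G : GrpConv) (x y : G) : G := gc_add G x (gc_opp G y).

Definition is_abgroup (G : GrpConv) : Prop :=
  (forall x y z : G, gc_add G x (gc_add G y z) = gc_add G (gc_add G x y) z) /\
  (forall x y : G, gc_add G x y = gc_add G y x) /\
  (forall x : G, gc_add G (gc_zero G) x = x) /\
  (forall x : G, gc_add G (gc_opp G x) x = gc_zero G).

Definition is_convergence (G : GrpConv) : Prop :=
  (forall F x, gc_conv G F x -> is_filter F) /\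
  (forall x : G, gc_conv G (point_filter x) x) /\
  (forall F H (x : G), gc_conv G F x -> gc_conv G H x -> gc_conv G (filter_inter F H) x) /\
  (forall F H (x : G), is_filter H -> (forall A, F A -> H A) ->
       gc_conv G F x -> gc_conv G H x).

Definition filter_sub (G : GrpConv) (F H : (G -> Prop) -> Prop) : (G -> Prop) -> Prop :=
  fun S => exists A B, F A /\ H B /\ (forall a b, A a -> B b -> S (gc_sub G a b)).

Definition is_conv_group (G : GrpConv) : Prop :=
  is_abgroup G /\ is_convergence G /\
  (forall F H (x y : G), gc_conv G F x -> gc_conv G H y ->
      gc_conv G (filter_sub G F H) (gc_sub G x y)).

Definition is_topology {X : Type} (opn : (X -> Prop) -> Prop) : Prop :=
  opn (fun _ => True) /\
  (forall (I : Type) (U : I -> X -> Prop), (forall i, opn (U i)) ->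
       opn (fun x => exists i, U i x)) /\
  (forall U V, opn U -> opn V -> opn (fun x => U x /\ V x)).

(** L is a topological group with topology [opn]: L is a convergence group whose
    convergent filters are exactly the filters finer than the neighbourhood filter. *)
Definition is_top_group (L : GrpConv) (opn : (L -> Prop) -> Prop) : Prop :=
  is_conv_group L /\ is_topology opn /\
  (forall F (x : L), is_filter F ->
     (gc_conv L F x <-> (forall U, opn U -> U x -> F U))).

Definition hausdorff {X : Type} (opn : (X -> Prop) -> Prop) : Prop :=
  forall x y : X, x <> y -> exists U V, opn U /\ opn V /\ U x /\ V y /\
     (forall z, U z -> V z -> False).

Definition is_hom (G L : GrpConv) (f : G -> L) : Prop :=
  forall x y : G, f (gc_add G x y) = gc_add L (f x) (f y).

Definition continuous (G L : GrpConv) (f : G -> L) : Prop :=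
  forall F (x : G), gc_conv G F x -> gc_conv L (filter_image f F) (f x).

Definition Gamma (G L : GrpConv) (f : G -> L) : Prop := is_hom G L f /\ continuous G L f.

(** pointwise convergence on functions G -> L (the convergence of Gamma_s(G,L)) *)
Definition pointwise_conv (G L : GrpConv) (Phi : ((G -> L) -> Prop) -> Prop) (f : G -> L)
  : Prop := forall x : G, gc_conv L (filter_image (fun g : G -> L => g x) Phi) (f x).

(** M is a compact subset of Gamma_s(G,L): every ultrafilter containing M
    converges pointwise to an element of M. *)
Definition compact_s (G L : GrpConv) (M : (G -> L) -> Prop) : Prop :=
  (forall f, M f -> Gamma G L f) /\
  (forall Phi, is_ultrafilter Phi -> Phi M ->
     exists f, M f /\ pointwise_conv G L Phi f).

Definition equicontinuous (G L : GrpConv) (M : (G -> L) -> Prop) : Prop :=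
  forall F, gc_conv G F (gc_zero G) ->
    gc_conv L (fun S => exists A, F A /\ forall f x, M f -> A x -> S (f x)) (gc_zero L).

(** * The circle group T = R/Z, represented by [0,1) *)
Definition Tcar : Type := { r : R | 0 <= r < 1 }.

Lemma frac_part_range (r : R) : 0 <= frac_part r < 1.
Proof. destruct (base_fp r) as [H1 H2]. split; [apply Rge_le; exact H1 | exact H2]. Qed.

Definition rho (r : R) : Tcar := exist _ (frac_part r) (frac_part_range r).

Definition Tval (t : Tcar) : R := proj1_sig t.

Definition T_conv (F : (Tcar -> Prop) -> Prop) (t : Tcar) : Prop :=
  is_filter F /\
  forall eps : R, eps > 0 ->
    F (fun s => exists k : Z, Rabs (Tval s - Tval t - IZR k) < eps).

Definition TT : GrpConv := {|
  gc_car := Tcar;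
  gc_zero := rho 0;
  gc_add := fun s t => rho (Tval s + Tval t);
  gc_opp := fun s => rho (- Tval s);
  gc_conv := T_conv
|}.

Definition Tplus (t : Tcar) : Prop :=
  exists r : R, -(1/4) <= r <= 1/4 /\ rho r = t.

Definition quasi_convex (L : GrpConv) (A : L -> Prop) : Prop :=
  forall x : L, ~ A x ->
    exists phi : L -> TT, Gamma L TT phi /\
      (forall a, A a -> Tplus (phi a)) /\ ~ Tplus (phi x).

Definition nbhd {X : Type} (opn : (X -> Prop) -> Prop) (x : X) (U : X -> Prop) : Prop :=
  exists V, opn V /\ V x /\ (forall y, V y -> U y).

Definition locally_quasi_convex (L : GrpConv) (opn : (L -> Prop) -> Prop) : Prop :=
  forall U, nbhd opn (gc_zero L) U ->
    exists W, nbhd opn (gc_zero L) W /\ quasi_convex L W /\ (forall y, W y -> U y).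

Definition g_barrelled (G : GrpConv) : Prop :=
  forall M : (G -> TT) -> Prop, compact_s G TT M -> equicontinuous G TT M.

(* Main.v *)
Require Import Defs.
From Stdlib Require Import Reals Lra Lia ZArith ClassicalEpsilon ProofIrrelevance Classical.
Open Scope R_scope.

Ltac rabs := unfold Rabs in *; repeat match goal with |- context [Rcase_abs ?x] => destruct (Rcase_abs x) | H : context [Rcase_abs ?x] |- _ => destruct (Rcase_abs x) end; try lra.

Definition near (a b e : R) : Prop := exists k : Z, Rabs (a - b - IZR k) < e.
Definition c14 (t : Tcar) : Prop := exists z : Z, Rabs (Tval t - IZR z) <= 1/4.

Lemma Tval_range (t : Tcar) : 0 <= Tval t < 1.
Proof. exact (proj2_sig t). Qed.

Lemma Tval_rho (r : R) : exists z : Z, Tval (rho r) = r + IZR z.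
Proof. exists (- Int_part r)%Z. unfold Tval, rho, frac_part; simpl. rewrite opp_IZR; ring. Qed.

Lemma Tval_inj (s t : Tcar) : Tval s = Tval t -> s = t.
Proof.
  destruct s as [s Hs], t as [t Ht]; unfold Tval; simpl; intros ->.
  f_equal; apply proof_irrelevance.
Qed.

Lemma rho_Tval_shift (t : Tcar) (k : Z) : rho (Tval t + IZR k) = t.
Proof.
  apply Tval_inj. unfold rho, Tval at 1; simpl. unfold frac_part, Int_part.
  pose proof (Tval_range t).
  assert (E : (k + 1)%Z = up (Tval t + IZR k)).
  { apply tech_up; rewrite plus_IZR; simpl; lra. }
  rewrite <- E. rewrite minus_IZR, plus_IZR. simpl. unfold Tval. ring.
Qed.

Lemma Tval_rho0 : Tval (rho 0) = 0.
Proof.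
  pose proof (Tval_rho 0) as [z Hz]. pose proof (Tval_range (rho 0)).
  assert (z = 0%Z) as ->.
  { assert (-1 < IZR z < 1) as [H1 H2] by lra.
    apply lt_IZR in H1; apply lt_IZR in H2; lia. }
  lra.
Qed.

Lemma near_tri a b c e1 e2 : near a b e1 -> near b c e2 -> near a c (e1 + e2).
Proof.
  intros [k1 H1] [k2 H2]. exists (k1 + k2)%Z. rewrite plus_IZR. rabs.
Qed.

Lemma near_shiftl a b e z : near a b e -> near (a + IZR z) b e.
Proof. intros [k H]. exists (k + z)%Z. rewrite plus_IZR. rabs. Qed.

Lemma near_shiftr a b e z : near a b e -> near a (b + IZR z) e.
Proof. intros [k H]. exists (k - z)%Z. rewrite minus_IZR. rabs. Qed.

Lemma near_sym a b e : near a b e -> near b a e.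
Proof. intros [k H]. exists (- k)%Z. rewrite opp_IZR. rabs. Qed.

Lemma near_eq u v : 0 <= u < 1 -> 0 <= v < 1 -> (forall e, e > 0 -> near u v e) -> u = v.
Proof.
  intros Hu Hv H. apply NNPP; intro Hne.
  assert (Hd : 0 < Rmin (Rabs (u - v)) (1 - Rabs (u - v))).
  { apply Rmin_glb_lt; rabs. }
  destruct (H _ Hd) as [k Hk].
  pose proof (Rmin_l (Rabs (u - v)) (1 - Rabs (u - v))).
  pose proof (Rmin_r (Rabs (u - v)) (1 - Rabs (u - v))).
  destruct (Z.lt_total k 0) as [Hk0 | [Hk0 | Hk0]].
  - assert (IZR k <= -1) by (apply IZR_le; lia). rabs.
  - subst k. simpl in Hk. rabs.
  - assert (1 <= IZR k) by (apply IZR_le; lia). rabs.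
Qed.

Lemma closed14 b : (forall e, e > 0 -> exists z : Z, Rabs (b - IZR z) <= 1/4 + e) ->
  exists z : Z, Rabs (b - IZR z) <= 1/4.
Proof.
  intros H. apply NNPP; intro Hn.
  assert (Hall : forall z : Z, Rabs (b - IZR z) > 1/4).
  { intro z. apply Rnot_le_lt. intro Hz. apply Hn. exists z; exact Hz. }
  pose proof (archimed b) as [A1 A2].
  pose proof (Hall (up b - 1)%Z) as H1. pose proof (Hall (up b)) as H2.
  rewrite minus_IZR in H1. simpl in H1.
  set (e := Rmin (Rabs (b - (IZR (up b) - 1)) - 1/4) (Rabs (b - IZR (up b)) - 1/4) / 2).
  assert (He : e > 0).
  { unfold e. assert (0 < Rmin (Rabs (b - (IZR (up b) - 1)) - 1/4) (Rabs (b - IZR (up b)) - 1/4)).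
    apply Rmin_glb_lt; lra. lra. }
  pose proof (Rmin_l (Rabs (b - (IZR (up b) - 1)) - 1/4) (Rabs (b - IZR (up b)) - 1/4)).
  pose proof (Rmin_r (Rabs (b - (IZR (up b) - 1)) - 1/4) (Rabs (b - IZR (up b)) - 1/4)).
  destruct (H e He) as [z Hz].
  assert (Hz1 : IZR z < b + 1) by (unfold e in *; rabs).
  assert (Hz2 : b - 1 < IZR z) by (unfold e in *; rabs).
  assert (IZR (up b) - 2 < IZR z) by lra.
  assert (IZR z < IZR (up b) + 1) by lra.
  assert (Q1 : IZR (up b - 2) < IZR z) by (rewrite minus_IZR; simpl; lra).
  assert (Q2 : IZR z < IZR (up b + 1)) by (rewrite plus_IZR; simpl; lra).
  apply lt_IZR in Q1; apply lt_IZR in Q2.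
  assert (z = (up b - 1)%Z \/ z = up b) as [-> | ->] by lia.
  - rewrite minus_IZR in Hz; simpl in Hz. unfold e in *. lra.
  - unfold e in *; lra.
Qed.

Lemma AR (n : nat) (r : R) :
  (forall k, (k < S n)%nat -> exists z : Z, Rabs (INR (S k) * r - IZR z) <= 1/4) ->
  exists z : Z, 4 * INR (S n) * Rabs (r - IZR z) <= 1.
Proof.
  induction n as [|n IH]; intros H.
  - destruct (H 0%nat ltac:(lia)) as [z Hz]. exists z. simpl in *. rabs.
  - destruct IH as [z Hz]. { intros k Hk. apply H. lia. }
    destruct (H (S n) ltac:(lia)) as [z2 Hz2].
    set (a := INR (S n)) in *.
    assert (Ha : 1 <= a) by (unfold a; rewrite S_INR; pose proof (pos_INR n); lra).
    rewrite (S_INR (S n)) in Hz2 |- *. fold a in Hz2 |- *.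
    set (s := r - IZR z) in *.
    assert (Hr : r = s + IZR z) by (unfold s; ring).
    rewrite Hr in Hz2.
    set (m := (z2 - (Z.of_nat (S (S n))) * z)%Z).
    assert (Em : (a + 1) * (s + IZR z) - IZR z2 = (a + 1) * s - IZR m).
    { unfold m. rewrite minus_IZR, mult_IZR, <- INR_IZR_INZ, S_INR. fold a. ring. }
    rewrite Em in Hz2.
    assert (Hs : (a + 1) * Rabs s <= 1/2).
    { assert (2 * a * Rabs s <= 1/2) by nra. pose proof (Rabs_pos s). nra. }
    assert (Hm : m = 0%Z).
    { assert (Rabs ((a+1) * s) <= 1/2) by (rewrite Rabs_mult, (Rabs_right (a+1)) by lra; lra).
      assert (-1 < IZR m < 1) as [H1 H2] by rabs.
      apply lt_IZR in H1; apply lt_IZR in H2; lia. }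
    rewrite Hm in Hz2. simpl in Hz2.
    exists z. fold s.
    rewrite Rminus_0_r, Rabs_mult, (Rabs_right (a+1)) in Hz2 by lra. nra.
Qed.

Lemma fil_mp {X : Type} (F : (X -> Prop) -> Prop) (A B C : X -> Prop) :
  is_filter F -> F A -> F B -> (forall x, A x -> B x -> C x) -> F C.
Proof.
  intros [H1 [H2 H3]] HA HB H. apply (H2 _ _ (H3 _ _ HA HB)). intros x [? ?]; auto.
Qed.

Lemma fil_up {X : Type} (F : (X -> Prop) -> Prop) (A C : X -> Prop) :
  is_filter F -> F A -> (forall x, A x -> C x) -> F C.
Proof. intros [H1 [H2 H3]] HA H. exact (H2 _ _ HA H). Qed.

Lemma image_filter {X Y : Type} (f : X -> Y) F : is_filter F -> is_filter (filter_image f F).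
Proof.
  intros [H1 [H2 H3]]; unfold filter_image; repeat split.
  - exact H1.
  - intros A B HA HAB. apply (H2 _ _ HA). intros x; apply HAB.
  - intros A B HA HB. exact (H3 _ _ HA HB).
Qed.

Lemma image_ultra {X Y : Type} (f : X -> Y) F : is_ultrafilter F -> is_ultrafilter (filter_image f F).
Proof.
  intros [Hf [Hp Hu]]. split; [apply image_filter; auto|]. split.
  - unfold filter_image. exact Hp.
  - intros A. unfold filter_image. apply (Hu (fun a => A (f a))).
Qed.

Lemma ultra_ne {X : Type} (F : (X -> Prop) -> Prop) A : is_ultrafilter F -> F A -> exists x, A x.
Proof.
  intros [Hf [Hp _]] HA. apply NNPP; intro Hn. apply Hp.
  apply (fil_up F A); auto. intros x Hx; apply Hn; eauto.
Qed.

Lemma T_compact (U : (Tcar -> Prop) -> Prop) : is_ultrafilter U -> exists t, T_conv U t.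
Proof.
  intros HU. pose proof HU as [Hf [Hp Hu]].
  set (E := fun r => U (fun s => r <= Tval s)).
  assert (Hb : bound E).
  { exists 1. intros r Hr. destruct (Rle_dec r 1) as [?|Hn]; auto. exfalso. apply Hp.
    apply (fil_up U _ _ Hf Hr). intros s Hs. pose proof (Tval_range s). lra. }
  assert (He : exists r, E r).
  { exists 0. apply (fil_up U (fun _ => True)); [auto| apply Hf |]. intros s _. apply Tval_range. }
  destruct (completeness E Hb He) as [c [Hc1 Hc2]].
  exists (rho c). split; [exact Hf|]. intros eps Heps.
  destruct (Tval_rho c) as [z Hz].
  assert (H1 : exists r, E r /\ r > c - eps).
  { apply NNPP; intro Hn. assert (c <= c - eps); [|lra]. apply Hc2. intros r Hr.
    destruct (Rle_dec r (c - eps)) as [?|Hr2]; auto. exfalso. apply Hn. exists r; split; auto; lra. }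
  destruct H1 as [r [Hr Hr2]].
  assert (H2 : ~ E (c + eps/2)).
  { intro H. pose proof (Hc1 _ H). lra. }
  destruct (Hu (fun s => c + eps/2 <= Tval s)) as [H3|H3]; [contradiction|].
  apply (fil_mp U _ _ _ Hf Hr H3). intros s Hs1 Hs2. exists (- z)%Z. rewrite Hz, opp_IZR.
  apply Rnot_le_lt in Hs2. unfold Rabs; destruct Rcase_abs; lra.
Qed.

Section GL.
Lemma ab_add0r (G : GrpConv) : is_abgroup G -> forall x, gc_add G x (gc_zero G) = x.
Proof. intros [A [C [Z I]]] x. rewrite C. apply Z. Qed.

Lemma ab_subK (G : GrpConv) : is_abgroup G -> forall z y, gc_add G (gc_sub G z y) y = z.
Proof.
  intros HG z y. pose proof HG as [A [C [Z I]]]. unfold gc_sub. rewrite <- A, I. apply ab_add0r; auto.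
Qed.

Lemma ab_subv (G : GrpConv) : is_abgroup G -> forall y, gc_sub G y y = gc_zero G.
Proof. intros [A [C [Z I]]] y. unfold gc_sub. rewrite C. apply I. Qed.

Lemma ab_oppK (G : GrpConv) : is_abgroup G -> forall d, gc_opp G (gc_opp G d) = d.
Proof.
  intros HG d. pose proof HG as [A [C [Z I]]].
  rewrite <- (ab_add0r G HG (gc_opp G (gc_opp G d))).
  rewrite <- (I d). rewrite A. rewrite I. apply Z.
Qed.

Lemma ab_sub0sub (G : GrpConv) : is_abgroup G -> forall a d,
  gc_sub G a (gc_sub G (gc_zero G) d) = gc_add G a d.
Proof.
  intros HG a d. pose proof HG as [A [C [Z I]]]. unfold gc_sub. rewrite Z, ab_oppK; auto.
Qed.
End GL.

Lemma nbhd_filter (L : GrpConv) opn : is_topology opn -> is_filter (nbhd opn (gc_zero L)).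
Proof.
  intros [T1 [T2 T3]]. repeat split.
  - exists (fun _ => True); repeat split; auto.
  - intros A B [O [HO [HO0 HOA]]] HAB. exists O; repeat split; auto.
  - intros A B [O [HO [HO0 HOA]]] [P [HP [HP0 HPB]]]. exists (fun x => O x /\ P x).
    repeat split; auto; apply HOA || apply HPB; tauto.
Qed.

Lemma conv_nbhd (L : GrpConv) opn : is_top_group L opn -> forall F x,
  gc_conv L F x -> forall U, opn U -> U x -> F U.
Proof.
  intros [[HA [HC HS]] [HT Hiff]] F x Hc. pose proof HC as [Hf _].
  apply (proj1 (Hiff F x (Hf _ _ Hc))). exact Hc.
Qed.

Lemma conv_nbhd' (L : GrpConv) opn : is_top_group L opn -> forall F x,
  gc_conv L F x -> forall U, nbhd opn x U -> F U.
Proof.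
  intros HL F x Hc U [O [HO [HOx HOU]]]. pose proof HL as [[HA [HC HS]] _]. pose proof HC as [Hf _].
  apply (fil_up F O); auto. eapply Hf; eauto. eapply conv_nbhd; eauto.
Qed.

Lemma ADD (L : GrpConv) opn : is_top_group L opn -> forall W, nbhd opn (gc_zero L) W ->
  exists A D, nbhd opn (gc_zero L) A /\ nbhd opn (gc_zero L) D /\
    forall a d, A a -> D d -> W (gc_add L a d).
Proof.
  intros HL W HW. pose proof HL as [[HA [HC HS]] [HT Hiff]].
  assert (H0 : gc_conv L (nbhd opn (gc_zero L)) (gc_zero L)).
  { apply (proj2 (Hiff _ _ (nbhd_filter L opn HT))). intros U HU HU0. exists U; auto. }
  pose proof (HS _ _ _ _ (proj1 (proj2 HC) (gc_zero L)) H0) as H1.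
  pose proof (HS _ _ _ _ H0 H1) as H2.
  rewrite (ab_sub0sub L HA), (ab_add0r L HA) in H2.
  pose proof (conv_nbhd' L opn HL _ _ H2 W HW) as [A [B [HA' [HB' HAB]]]].
  destruct HB' as [C [D [HC' [HD' HCD]]]].
  exists A, D. split; [exact HA'|split; [exact HD'|]]. intros a d Ha Hd.
  rewrite <- (ab_sub0sub L HA). apply HAB; auto.
Qed.

Lemma TRANS (L : GrpConv) opn : is_top_group L opn -> forall H y V,
  gc_conv L H y -> nbhd opn (gc_zero L) V -> H (fun z => V (gc_sub L z y)).
Proof.
  intros HL H y V Hc HV. pose proof HL as [[HA [HC HS]] [HT Hiff]].
  pose proof (HS _ _ _ _ Hc (proj1 (proj2 HC) y)) as H1.
  rewrite ab_subv in H1 by auto.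
  pose proof (conv_nbhd' L opn HL _ _ H1 V HV) as [A [B [HA' [HB' HAB]]]].
  apply (fil_up H A); auto. apply (proj1 HC _ _ Hc).
Qed.

Fixpoint mul1 (L : GrpConv) (k : nat) (y : L) : L :=
  match k with O => y | S k' => gc_add L y (mul1 L k' y) end.

Definition Kset (L : GrpConv) (W : L -> Prop) (chi : L -> TT) : Prop :=
  is_hom L TT chi /\ forall w, W w -> c14 (chi w).

Lemma VN (L : GrpConv) opn : is_top_group L opn -> forall n W, nbhd opn (gc_zero L) W ->
  exists V, nbhd opn (gc_zero L) V /\ forall v, V v -> forall k, (k < S n)%nat -> W (mul1 L k v).
Proof.
  intros HL n. induction n as [|n IH]; intros W HW.
  - exists W; split; auto. intros v Hv k Hk. destruct k; [exact Hv| lia].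
  - destruct (ADD L opn HL W HW) as [A [D [HA [HD HAD]]]].
    destruct (IH D HD) as [V' [HV' HV'D]].
    pose proof HL as [_ [HT _]].
    pose proof (nbhd_filter L opn HT) as Hf.
    exists (fun v => V' v /\ A v /\ W v). split.
    + apply (fil_mp _ V' (fun v => A v /\ W v)); auto.
      apply (fil_mp _ A W); auto.
    + intros v [H1 [H2 H3]] k Hk. destruct k as [|k]; [exact H3|]. simpl.
      apply HAD; auto. apply HV'D; auto. lia.
Qed.

Lemma mul1_hom (L : GrpConv) chi : is_hom L TT chi -> forall k v,
  exists z : Z, Tval (chi (mul1 L k v)) = INR (S k) * Tval (chi v) + IZR z.
Proof.
  intros Hh k v. induction k as [|k [z Hz]].
  - exists 0%Z. simpl. ring.
  - simpl mul1. rewrite Hh. simpl gc_add. destruct (Tval_rho (Tval (chi v) + Tval (chi (mul1 L k v)))) as [z' Hz'].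
    rewrite Hz', Hz. exists (z + z')%Z. rewrite plus_IZR, (S_INR (S k)). ring.
Qed.

Lemma UNIF (L : GrpConv) opn : is_top_group L opn -> forall W, nbhd opn (gc_zero L) W ->
  forall eps, eps > 0 -> exists V, nbhd opn (gc_zero L) V /\
  forall chi, Kset L W chi -> forall v, V v -> near (Tval (chi v)) 0 eps.
Proof.
  intros HL W HW eps Heps.
  destruct (archimed_cor1 eps Heps) as [N [HN HN0]].
  destruct N as [|n]; [lia|].
  destruct (VN L opn HL n W HW) as [V [HV HVW]].
  exists V; split; auto. intros chi [Hh HK] v Hv.
  assert (H : forall k, (k < S n)%nat -> exists z : Z, Rabs (INR (S k) * Tval (chi v) - IZR z) <= 1/4).
  { intros k Hk. destruct (HK _ (HVW v Hv k Hk)) as [z Hz].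
    destruct (mul1_hom L chi Hh k v) as [z' Hz']. rewrite Hz' in Hz.
    exists (z - z')%Z. rewrite minus_IZR. replace (INR (S k) * Tval (chi v) - (IZR z - IZR z'))
      with (INR (S k) * Tval (chi v) + IZR z' - IZR z) by ring. exact Hz. }
  destruct (AR n _ H) as [z Hz]. exists z. rewrite Rminus_0_r.
  assert (Hp : 0 < INR (S n)) by (apply lt_0_INR; lia).
  assert (Rabs (Tval (chi v) - IZR z) <= / INR (S n) / 4).
  { apply (Rmult_le_reg_l (4 * INR (S n))). lra.
    replace (4 * INR (S n) * (/ INR (S n) / 4)) with 1 by (field; lra). exact Hz. }
  assert (0 < / INR (S n)) by (apply Rinv_0_lt_compat; lra). lra.
Qed.

Lemma CONT (L : GrpConv) opn : is_top_group L opn -> forall W, nbhd opn (gc_zero L) W ->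
  forall chi, Kset L W chi -> continuous L TT chi.
Proof.
  intros HL W HW chi HK F y Hc. pose proof HL as [[HA [HC HS]] _].
  change (T_conv (filter_image chi F) (chi y)). split.
  { apply image_filter. exact (proj1 HC _ _ Hc). }
  intros eps Heps. destruct (UNIF L opn HL W HW eps Heps) as [V [HV HVn]].
  pose proof (TRANS L opn HL F y V Hc HV) as HT.
  apply (fil_up F _ _ (proj1 HC _ _ Hc) HT). intros z Hz.
  pose proof (HVn chi HK _ Hz) as Hn.
  assert (E : chi z = chi (gc_add L (gc_sub L z y) y)) by (rewrite (ab_subK L HA); auto).
  rewrite E, (proj1 HK). simpl gc_add.
  destruct (Tval_rho (Tval (chi (gc_sub L z y)) + Tval (chi y))) as [k Hk]. rewrite Hk.
  destruct Hn as [m Hm]. exists (m + k)%Z. rewrite plus_IZR.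
  replace (Tval (chi (gc_sub L z y)) + Tval (chi y) + IZR k - Tval (chi y) - (IZR m + IZR k))
    with (Tval (chi (gc_sub L z y)) - 0 - IZR m) by ring. exact Hm.
Qed.

Definition Nset (G L : GrpConv) (M : (G -> L) -> Prop) (W : L -> Prop) (g : G -> TT) : Prop :=
  exists f chi, M f /\ Kset L W chi /\ g = (fun x => chi (f x)).

Lemma COMPACT (G L : GrpConv) opn : is_top_group L opn -> forall W, nbhd opn (gc_zero L) W ->
  forall M, compact_s G L M -> compact_s G TT (Nset G L M W).
Proof.
  intros HL W HW M [HMG HMc]. pose proof HL as [[HA [HC HS]] _]. split.
  { intros g [f [chi [Hf [HK ->]]]]. destruct (HMG f Hf) as [Hfh Hfc]. split.
    - intros x y. rewrite Hfh. apply (proj1 HK).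
    - intros F x Hc. exact (CONT L opn HL W HW chi HK _ _ (Hfc F x Hc)). }
  intros Phi HPhi HN. pose proof HPhi as [HPf _].
  set (P := fun (g : G -> TT) (p : (G -> L) * (L -> TT)) =>
         M (fst p) /\ Kset L W (snd p) /\ g = (fun x => snd p (fst p x))).
  assert (inh : inhabited ((G -> L) * (L -> TT))) by exact (inhabits (fun _ => gc_zero L, fun _ => rho 0)).
  set (sel := fun g => epsilon inh (P g)).
  assert (Hsel : forall g, Nset G L M W g -> P g (sel g)).
  { intros g [f [chi [H1 [H2 H3]]]]. apply epsilon_spec. exists (f, chi). unfold P; simpl; auto. }
  assert (HPs : Phi (fun g => P g (sel g))) by (apply (fil_up Phi _ _ HPf HN); exact Hsel).
  destruct (HMc (filter_image (fun g => fst (sel g)) Phi) (image_ultra _ _ HPhi)) as [f0 [Hf0 Hpw]].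
  { unfold filter_image. apply (fil_up Phi _ _ HPf HPs). intros g [H _]; exact H. }
  assert (Hex : forall y, exists t, T_conv (filter_image (fun g => snd (sel g) y) Phi) t).
  { intros y. apply T_compact. apply image_ultra; auto. }
  assert (inhT : inhabited Tcar) by exact (inhabits (rho 0)).
  set (chi0 := fun y => epsilon inhT (fun t => T_conv (filter_image (fun g => snd (sel g) y) Phi) t)).
  assert (Hchi0 : forall y, T_conv (filter_image (fun g => snd (sel g) y) Phi) (chi0 y)).
  { intros y. apply epsilon_spec. apply Hex. }
  assert (Hnear : forall y e, e > 0 -> Phi (fun g => near (Tval (snd (sel g) y)) (Tval (chi0 y)) e)).
  { intros y e He. exact (proj2 (Hchi0 y) e He). }
  assert (HK0 : Kset L W chi0).
  { split.
    - intros a b. apply Tval_inj. simpl gc_add.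
      apply near_eq; try apply Tval_range. intros e He.
      assert (He3 : e / 3 > 0) by lra.
      assert (HH : Phi (fun g => P g (sel g) /\ near (Tval (snd (sel g) (gc_add L a b))) (Tval (chi0 (gc_add L a b))) (e/3)
          /\ near (Tval (snd (sel g) a)) (Tval (chi0 a)) (e/3) /\ near (Tval (snd (sel g) b)) (Tval (chi0 b)) (e/3))).
      { apply (fil_mp Phi _ _ _ HPf HPs (fil_mp Phi _ _ _ HPf (Hnear (gc_add L a b) _ He3) (fil_mp Phi _ _ _ HPf (Hnear a _ He3) (Hnear b _ He3) (fun _ x y => conj x y)) (fun _ x y => conj x y))).
        intros g x y; exact (conj x y). }
      destruct (ultra_ne _ _ HPhi HH) as [g [[_ [[Hh _] _]] [N1 [N2 N3]]]].
      rewrite Hh in N1. simpl gc_add in N1.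
      match type of N1 with context [Tval (rho ?r)] => destruct (Tval_rho r) as [z1 Hz1]; rewrite Hz1 in N1 end.
      match goal with |- context [Tval (rho ?r)] => destruct (Tval_rho r) as [z2 Hz2]; rewrite Hz2 end.
      apply near_sym in N1. apply near_shiftr with (z := (-z1)%Z) in N1.
      rewrite opp_IZR in N1. replace (Tval (snd (sel g) a) + Tval (snd (sel g) b) + IZR z1 + - IZR z1)
        with (Tval (snd (sel g) a) + Tval (snd (sel g) b)) in N1 by ring.
      apply near_shiftr. replace e with (e/3 + (e/3 + e/3)) by field.
      apply (near_tri _ _ _ _ _ N1).
      destruct N2 as [k2 N2], N3 as [k3 N3]. exists (k2 + k3)%Z.
      rewrite plus_IZR. change (gc_car TT) with Tcar in *. unfold Rabs in *; repeat destruct Rcase_abs; lra.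
    - intros w Hw. apply closed14. intros e He.
      destruct (ultra_ne _ _ HPhi (fil_mp Phi _ _ _ HPf HPs (Hnear w e He) (fun _ x y => conj x y)))
        as [g [[_ [[_ HKg] _]] [k Hk]]].
      destruct (HKg w Hw) as [z Hz]. exists (z - k)%Z. rewrite minus_IZR.
      unfold Rabs in *; repeat destruct Rcase_abs; lra. }
  exists (fun x => chi0 (f0 x)). split.
  { exists f0, chi0. auto. }
  intros x. change (T_conv (filter_image (fun g => g x) Phi) (chi0 (f0 x))). split.
  { apply image_filter; auto. }
  intros eps Heps. assert (He2 : eps / 2 > 0) by lra.
  destruct (UNIF L opn HL W HW _ He2) as [V [HV HVn]].
  pose proof (TRANS L opn HL _ _ V (Hpw x) HV) as HT. unfold filter_image in HT.
  apply (fil_mp Phi _ _ _ HPf HPs (fil_mp Phi _ _ _ HPf HT (Hnear (f0 x) _ He2) (fun _ x y => conj x y))).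
  intros g [Hf [HK Hg]] [Hv Hn].
  set (f := fst (sel g)) in *. set (chi := snd (sel g)) in *.
  assert (Egx : g x = chi (f x)) by exact (f_equal (fun h => h x) Hg).
  rewrite Egx.
  assert (E : chi (f x) = chi (gc_add L (gc_sub L (f x) (f0 x)) (f0 x))) by (rewrite (ab_subK L HA); auto).
  rewrite E, (proj1 HK). simpl gc_add.
  destruct (Tval_rho (Tval (chi (gc_sub L (f x) (f0 x))) + Tval (chi (f0 x)))) as [k Hk]. rewrite Hk.
  pose proof (HVn chi HK _ Hv) as [m Hm]. destruct Hn as [m' Hm'].
  exists (m + m' + k)%Z. rewrite !plus_IZR. unfold Rabs in *; repeat destruct Rcase_abs; lra.
Qed.

Theorem theorem2p15 (G L : GrpConv) (opnL : (L -> Prop) -> Prop) :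
  is_conv_group G -> g_barrelled G ->
  is_top_group L opnL -> hausdorff opnL -> locally_quasi_convex L opnL ->
  forall M : (G -> L) -> Prop, compact_s G L M -> equicontinuous G L M.
Proof.
  intros HG Hgb HL _ Hlqc M HM F HF.
  pose proof HL as [[HA [HC HS]] [HT Hiff]].
  pose proof HG as [_ [HCG _]]. pose proof (proj1 HCG _ _ HF) as HFf.
  assert (HMF : is_filter (fun S : L -> Prop => exists A : G -> Prop,
      F A /\ (forall (f : G -> L) (x : G), M f -> A x -> S (f x)))).
  { destruct HFf as [F1 [F2 F3]]. repeat split.
    + exists (fun _ => True); split; auto.
    + intros A B [C [HC1 HC2]] HAB. exists C; split; auto.
    + intros A B [C [HC1 HC2]] [D [HD1 HD2]]. exists (fun x => C x /\ D x). split; auto.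
      intros f x Hf [Hx1 Hx2]; split; auto. }
  apply (proj2 (Hiff _ _ HMF)).
  { intros U HU HU0.
    destruct (Hlqc U (ex_intro _ U (conj HU (conj HU0 (fun y H => H))))) as [W [HW [Hqc HWU]]].
    pose proof (Hgb _ (COMPACT G L opnL HL W HW M HM) F HF) as Heq.
    change (T_conv (fun S => exists A, F A /\ forall g x, Nset G L M W g -> A x -> S (g x)) (rho 0)) in Heq.
    destruct Heq as [_ Heq]. destruct (Heq (1/8) ltac:(lra)) as [A [HFA HAS]].
    exists A. split; auto. intros f x Hf Hx. apply HWU. apply NNPP; intro Hn.
    destruct (Hqc _ Hn) as [phi [[Hph Hpc] [HpW Hpx]]]. apply Hpx.
    assert (HN : Nset G L M W (fun x => phi (f x))).
    { exists f, phi. split; auto. split; auto. split; auto.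
      intros w Hw. destruct (HpW w Hw) as [r [Hr Hr2]].
      destruct (Tval_rho r) as [z Hz]. exists z. rewrite <- Hr2, Hz.
      replace (r + IZR z - IZR z) with r by ring. unfold Rabs; destruct Rcase_abs; lra. }
    destruct (HAS _ x HN Hx) as [k Hk]. rewrite Tval_rho0 in Hk.
    exists (Tval (phi (f x)) + IZR (- k)). split.
    + rewrite opp_IZR. unfold Rabs in Hk; destruct Rcase_abs; lra.
    + apply rho_Tval_shift. }
Qed.
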